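(* Let $W=\sum_{j\in[n]}p_j\mathrm B(\varepsilon_j)\in\mathbb B_n$ and $Q=\sum_{i\in[m]}q_i\mathrm B(\sigma_i)\in\mathbb B_m$, where $(p_j)$, $(q_i)$ are probability vectors and $\varepsilon_1,\dots,\varepsilon_n,\sigma_1,\dots,\sigma_m\in[0,1/2]$. Then $W\preccurlyeq Q$ if and only if there is a 1-matrix $(k_{i,j})_{m\times n}$ of pattern $(q_1,\dots,q_m;p_1,\dots,p_n)$ such that $$p_j\varepsilon_j\ \ge\ \sum_{i\in[m]}k_{i,j}\sigma_i\qquad\text{for every } j\in[n].$$
   Context: A binary-input discrete memoryless channel (BIDMC) $W$ has input $x$ uniformly distributed on $\{0,1\}$, a discrete output alphabet and transition probabilities $\Pr(y\mid x)$. Its LR-profile is $P_W(\varepsilon)=\Pr\big(\mathcal L_W(y)=\varepsilon/(1-\varepsilon)\big)$, $\varepsilon\in[0,1]$, where $\mathcal L_W(\hat y)=\Pr(y=\hat y\mid x=0)/\Pr(y=\hat y\mid x=1)$; $W\cong W'$ (equivalent) if their LR-profiles coincide, and all channel identities are up to $\cong$. $W'$ is a degradation of $W$, written $W'\preccurlyeq W$, if there is a channel $R$ from the output alphabet $\mathcal Y$ of $W$ to the output alphabet $\mathcal Y'$ of $W'$ with $\Pr(y'\mid x'=a)=\sum_{y\in\mathcal Y}\Pr(y\mid x=a)R(y'\mid y)$ for $a\in\{0,1\}$. $\mathrm B(\varepsilon)$ is the BSC with crossover probability $\varepsilon$. For BIDMCs $W_1,\dots,W_n$ and nonnegative $q_1,\dots,q_n$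 with sum 1, the random switching channel $\sum_j q_jW_j$ sends, with probability $q_j$ independently of the input, the input through $W_j$ and outputs the output of $W_j$ together with $j$. $\mathbb B_n$ is the set of BIDMCs equivalent to $\sum_{i\in[n]}p_i\mathrm B(\varepsilon_i)$ for some probability vector $(p_i)$ and $\varepsilon_i\in[0,1]$. $[n]=\{1,\dots,n\}$. A 1-matrix of pattern $(q_1,\dots,q_m;p_1,\dots,p_n)$ is a matrix $(k_{i,j})_{m\times n}$ with $k_{i,j}\ge0$, $\sum_{j\in[n]}k_{i,j}=q_i$ ($i\in[m]$) and $\sum_{i\in[m]}k_{i,j}=p_j$ ($j\in[n]$). *)

(* Defs.v *)
From HB Require Import structures.
From mathcomp Require Import all_boot all_order all_algebra.
From mathcomp Require Import reals.
Set Implicit Arguments. Unset Strict Implicit. Unset Printing Implicit Defensive.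
Import Order.TTheory GRing.Theory Num.Theory.
Local Open Scope ring_scope.

(* A binary-input channel with finite output alphabet Y:
   chan R Y a y = Pr(y | x = a). *)
Definition chan (R : realType) (Y : finType) := bool -> Y -> R.

Definition bsc (R : realType) (eps : R) : chan R bool :=
  fun a b => if a == b then 1 - eps else eps.

(* The random switching channel sum_j p_j B(eps_j): it outputs the pair
   (j, output of B(eps_j)), j being chosen with probability p_j. *)
Definition bsc_switch (R : realType) (n : nat) (p eps : 'I_n -> R)
  : chan R ('I_n * bool)%type :=
  fun a y => p y.1 * bsc (eps y.1) a y.2.

(* Degradation: W' \preccurlyeq W iff there is a channel (stochastic
   kernel) Rk from the outputs of W to the outputs of W' with
   W'(y'|a) = sum_y W(y|a) Rk(y'|y). *)
Definition degraded (R : realType) (Y Y' : finType)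
    (W' : chan R Y') (W : chan R Y) : Prop :=
  exists Rk : Y -> Y' -> R,
    (forall y y', 0 <= Rk y y') /\
    (forall y, \sum_(y' : Y') Rk y y' = 1) /\
    (forall a y', W' a y' = \sum_(y : Y) W a y * Rk y y').

Definition prob_vec (R : realType) (n : nat) (p : 'I_n -> R) : Prop :=
  (forall j, 0 <= p j) /\ \sum_(j < n) p j = 1.

Definition one_matrix (R : realType) (m n : nat)
    (q : 'I_m -> R) (p : 'I_n -> R) (k : 'M[R]_(m, n)) : Prop :=
  (forall i j, 0 <= k i j) /\
  (forall i, \sum_(j < n) k i j = q i) /\
  (forall j, \sum_(i < m) k i j = p j).

(* Main.v *)
Require Import Defs.
From HB Require Import structures.
From mathcomp Require Import all_boot all_order all_algebra.
From mathcomp Require Import reals.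
From mathcomp Require Import ring lra.
Import Order.TTheory GRing.Theory Num.Theory.
Local Open Scope ring_scope.

Lemma sum_pair (R : realType) (T : finType) (F : T * bool -> R) :
  \sum_(y : T * bool) F y = \sum_(t : T) (F (t, false) + F (t, true)).
Proof.
transitivity (\sum_(t : T) \sum_(b : bool) F (t, b)).
  by rewrite pair_bigA; apply: eq_bigr => -[t b].
apply: eq_bigr => t _; rewrite big_bool /=; by rewrite addrC.
Qed.

Lemma dlem (R : realType) (A B P E : R) :
  0 <= B -> 2 * A + B = P -> A <= E -> 2 * E <= P ->
  let d := if B == 0 then 0 else (E - A) / B in
  0 <= d <= 1 /\ A + d * B = E.
Proof.
move=> hB hP hAE hEP d; rewrite /d.
case: eqP => [B0|/eqP Bn0].
  subst B; split; [by rewrite lexx ler01 | lra].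
have Bp : 0 < B by rewrite lt_def Bn0 hB.
split; last by rewrite divfK //; lra.
apply/andP; split; first by apply: divr_ge0; lra.
rewrite ler_pdivrMr //; lra.
Qed.

Theorem theorem1 (R : realType) (m n : nat)
  (p eps : 'I_n -> R) (q sigma : 'I_m -> R) :
  prob_vec p -> prob_vec q ->
  (forall j, 0 <= eps j <= 1 / 2) ->
  (forall i, 0 <= sigma i <= 1 / 2) ->
  degraded (bsc_switch p eps) (bsc_switch q sigma) <->
  exists k : 'M[R]_(m, n),
    one_matrix q p k /\
    (forall j, \sum_(i < m) k i j * sigma i <= p j * eps j).
Proof.
move=> [hp0 hp1] [hq0 hq1] heps hsig; split.
- move=> [Rk [hR0 [hR1 hW]]].
  have hW' a j b' : p j * bsc (eps j) a b' = \sum_i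
     (q i * bsc (sigma i) a false * Rk (i,false) (j,b')
      + q i * bsc (sigma i) a true * Rk (i,true) (j,b')).
    by have := hW a (j,b'); rewrite sum_pair /bsc_switch /= => ->.
  pose k := \matrix_(i < m, j < n) (q i * (Rk (i,false) (j,false) + Rk (i,false) (j,true)
        + Rk (i,true) (j,false) + Rk (i,true) (j,true)) / 2).
  exists k; split; first split.
  + move=> i j; rewrite mxE; apply: divr_ge0; last by lra.
    apply: mulr_ge0 => //; rewrite !addr_ge0 //.
  + split.
    * move=> i.
      have hrow b : \sum_j (Rk (i,b) (j,false) + Rk (i,b) (j,true)) = 1.
        by rewrite -(hR1 (i,b)) sum_pair.
      rewrite (eq_bigr (fun j => q i / 2 * ((Rk (i,false) (j,false) + Rk (i,false) (j,true))
               + (Rk (i,true) (j,false) + Rk (i,true) (j,true))))); last first.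
        by move=> j _; rewrite mxE; ring.
      rewrite -mulr_sumr big_split /= !hrow; by field.
    * move=> j.
      have h2 : 2 * p j = \sum_i (q i * (Rk (i,false) (j,false) + Rk (i,false) (j,true)
        + Rk (i,true) (j,false) + Rk (i,true) (j,true))).
        have e1 := hW' false j false; have e2 := hW' false j true.
        have e3 := hW' true j false; have e4 := hW' true j true.
        rewrite /bsc /= in e1 e2 e3 e4.
        have -> : 2 * p j = p j * (1 - eps j) + p j * eps j + p j * eps j + p j * (1 - eps j) by ring.
        rewrite {1}e1 {1}e2 {1}e3 {1}e4 -!big_split /=; apply: eq_bigr => i _; ring.
      rewrite (eq_bigr (fun i => (q i * (Rk (i,false) (j,false) + Rk (i,false) (j,true)
        + Rk (i,true) (j,false) + Rk (i,true) (j,true))) / 2)); last by move=> i _; rewrite mxE.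
      rewrite -mulr_suml -h2; by field.
  + move=> j.
    have e2 := hW' false j true; have e3 := hW' true j false.
    rewrite /bsc /= in e2 e3.
    have h2 : p j * eps j = (\sum_i
     (q i * (1 - sigma i) * Rk (i,false) (j,true)
      + q i * sigma i * Rk (i,true) (j,true)
      + q i * sigma i * Rk (i,false) (j,false)
      + q i * (1 - sigma i) * Rk (i,true) (j,false))) / 2.
      have -> : p j * eps j = (p j * eps j + p j * eps j) / 2 by field.
      rewrite {1}e2 {1}e3 -big_split /=; congr (_ / 2); apply: eq_bigr => i _ /=; ring.
    rewrite h2 mulr_suml; apply: ler_sum => i _; rewrite mxE.
    have h : 0 <= q i * (1 - 2 * sigma i) * (Rk (i,false) (j,true) + Rk (i,true) (j,false)).
      have := hsig i; move=> /andP [s0 s1].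
      apply: mulr_ge0; [apply: mulr_ge0 => //; lra | by rewrite addr_ge0].
    rewrite -subr_ge0.
    set X := _ - _.
    have -> : X = q i * (1 - 2 * sigma i) * (Rk (i,false) (j,true) + Rk (i,true) (j,false)) / 2.
      rewrite /X; by field.
    by apply: divr_ge0 => //; lra.
- move=> [k [[hk0 [hkrow hkcol]] hineq]].
  have [j0 _] : exists j0 : 'I_n, True.
    case: (pickP (@predT 'I_n)) => [j0 _|h]; first by exists j0.
    exfalso; have : \sum_(j < n) p j = 0 by apply: big1 => j _; move: (h j).
    by rewrite hp1 => /eqP; rewrite oner_eq0.
  have hkq0 i j : q i = 0 -> k i j = 0.
    move=> h.
    have hs : \sum_(j | xpredT j) k i j = 0 by rewrite hkrow.
    by apply: (psumr_eq0P _ hs) => // j' _; apply: hk0.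
  pose A j := \sum_i k i j * sigma i.
  pose B j := \sum_i k i j * (1 - 2 * sigma i).
  pose d j := if B j == 0 then 0 else (p j * eps j - A j) / B j.
  have hd j : 0 <= d j <= 1 /\ A j + d j * B j = p j * eps j.
    have hB : 0 <= B j.
      apply: sumr_ge0 => i _; apply: mulr_ge0 => //.
      by have := hsig i => /andP [? ?]; lra.
    have hP : 2 * A j + B j = p j.
      rewrite -hkcol /A /B mulr_sumr -big_split; apply: eq_bigr => i _ /=; ring.
    have hEP : 2 * (p j * eps j) <= p j.
      have : 0 <= p j * (1 - 2 * eps j).
        by apply: mulr_ge0 => //; have := heps j => /andP [? ?]; lra.
      lra.
    have hAE : A j <= p j * eps j by exact: hineq.
    by move: (@dlem R _ _ _ _ hB hP hAE hEP).
  pose Rk := fun (y : 'I_m * bool) (y' : 'I_n * bool) =>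
    if q y.1 == 0 then (if y' == (j0, y.2) then 1 else 0)
    else k y.1 y'.1 / q y.1 * (if y.2 == y'.2 then 1 - d y'.1 else d y'.1).
  exists Rk; split; [|split].
  + move=> [i b] [j b']; rewrite /Rk /=; case: eqP => hq; first by case: ifP.
    apply: mulr_ge0; first by apply: divr_ge0.
    case: (hd j) => /andP [? ?] _; case: ifP => _; lra.
  + move=> [i b]; rewrite /Rk /=; case: eqP => hq.
      rewrite (bigD1 (j0,b)) //= eqxx big1 ?addr0 // => y hy.
      by rewrite (negbTE hy).
    rewrite sum_pair.
    transitivity (\sum_j k i j / q i).
      by apply: eq_bigr => j _; case: b => /=; ring.
    by rewrite -mulr_suml hkrow divff //; apply/eqP.
  + move=> a [j b']; rewrite /bsc_switch /= sum_pair /=.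
    rewrite (eq_bigr (fun i => k i j * bsc (sigma i + d j * (1 - 2 * sigma i)) a b')); last first.
      move=> i _; rewrite /Rk /=; case: eqP => hq.
        by rewrite hq (hkq0 _ _ hq); ring.
      have hq' : q i != 0 by apply/eqP.
      rewrite /bsc; case: a; case: b' => /=; by field.
    have hs : \sum_i k i j * (sigma i + d j * (1 - 2 * sigma i)) = p j * eps j.
      rewrite -(proj2 (hd j)) /A /B mulr_sumr -big_split; apply: eq_bigr => i _ /=; ring.
    rewrite /bsc; case: (a == b'); last by rewrite hs.
    rewrite (eq_bigr (fun i => k i j - k i j * (sigma i + d j * (1 - 2 * sigma i)))); last first.
      by move=> i _; ring.
    rewrite sumrB hkcol hs; ring.
Qed.
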